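(* Let $p,r$ be positive integers, $q=p+r$, and let $\Phi:U_{pq}(\mathbb{H})\to\mathbb{C}^{r\times 2p}$ be the map $$\Phi(Q)=\begin{pmatrix}U & V\end{pmatrix}\begin{pmatrix}Z-X & W-Y\\ \bar Y-\bar W & \bar Z-\bar X\end{pmatrix}^{-1},$$ where $Q=(Q_0;Q_1;Q_2)$ with $Q_0=Z+Wj$, $Q_1=X+Yj$, $Q_2=U+Vj$ ($Z,W,X,Y\in\mathbb{C}^{p\times p}$, $U,V\in\mathbb{C}^{r\times p}$). Then the complex valued components of $\Phi$ form an orthogonal harmonic family of $\mathbf{GL}_p(\mathbb{H})$-invariant functions on $U_{pq}(\mathbb{H})$, equipped with the semi-Euclidean metric.
   Context: $\mathbb{H}=\{z+wj: z,w\in\mathbb{C}\}$. $U_{pq}(\mathbb{H})=\{Q\in\mathbb{H}^{(p+q)\times p}: -Q_0^*Q_0+Q_1^*Q_1+Q_2^*Q_2<0\}$ (negative definite on $\mathbb{H}^p\setminus\{0\}$), where $Q_0,Q_1$ have $p$ rows and $Q_2$ has $r$ rows; $\mathbf{GL}_p(\mathbb{H})$ acts by right multiplication. The semi-Euclidean metric is $(X,Y)=\mathfrak{Re}\,\mathrm{trace}(X^*\mathrm{diag}(-I_p,I_q)Y)$; in the complex coordinates it is $-|dZ|^2-|dW|^2+|dX|^2+|dY|^2+|dU|^2+|dV|^2$. For a semi-Riemannian manifold $(M,g)$ and complex functions $\phi,\psi$, $\tau(\phi)$ is the Laplace–Beltrami operator (extended complex-linearly) and $\kappa(\phi,\psi)=g(\mathrm{grad}\,\phi,\mathrm{grad}\,\psi)$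 with $g$ extended complex-bilinearly. A set $\Omega$ of complex functions is an orthogonal harmonic family if $\tau(\phi)=0$ and $\kappa(\phi,\psi)=0$ for all $\phi,\psi\in\Omega$. *)

(* Defs.v *)
From HB Require Import structures.
From mathcomp Require Import all_boot all_order all_algebra.
From mathcomp Require Import all_classical all_reals all_analysis.
From mathcomp Require Import complex.
Set Implicit Arguments. Unset Strict Implicit. Unset Printing Implicit Defensive.
Import Order.TTheory GRing.Theory Num.Theory.
Local Open Scope ring_scope.

Section Defs.
Variable R : realType.
Local Notation C := (R[i]).

(* A quaternionic matrix A + B j (A, B complex matrices), with j z = conj(z) j. *)
Definition mconj m n (A : 'M[C]_(m, n)) : 'M[C]_(m, n) := map_mx (@conjc R) A.

(* product of quaternionic matrices (A + B j)(C' + D j) = (A C' - B conj D) + (A D + B conj C') j *)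
Definition qmul m n k (A B : 'M[C]_(m, n)) (C' D : 'M[C]_(n, k))
  : 'M[C]_(m, k) * 'M[C]_(m, k) :=
  (A *m C' - B *m mconj D, A *m D + B *m mconj C').

Definition sqnorm n (v : 'cV[C]_n) : R :=
  \sum_(i < n) ((complex.Re (v i ord0)) ^+ 2 + (complex.Im (v i ord0)) ^+ 2).

Definition qsqnorm n (ab : 'cV[C]_n * 'cV[C]_n) : R := sqnorm ab.1 + sqnorm ab.2.

(* A point Q = (Q0;Q1;Q2) of H^{(p+q) x p}, q = p + r, in complex coordinates:
   Q0 = Z + W j, Q1 = X + Y j, Q2 = U + V j. *)
Record HQ (p r : nat) := mkHQ {
  qZ : 'M[C]_p; qW : 'M[C]_p; qX : 'M[C]_p; qY : 'M[C]_p;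
  qU : 'M[C]_(r, p); qV : 'M[C]_(r, p) }.

Variables p r : nat.

(* Q belongs to U_{pq}(H): -Q0^*Q0 + Q1^*Q1 + Q2^*Q2 is negative definite on
   H^p \ {0}, i.e. for every nonzero v = a + b j in H^p,
   v^*(-Q0^*Q0 + Q1^*Q1 + Q2^*Q2)v = -|Q0 v|^2 + |Q1 v|^2 + |Q2 v|^2 < 0. *)
Definition inU (Q : HQ p r) : Prop :=
  forall a b : 'cV[C]_p, (a, b) != (0, 0) ->
    - qsqnorm (qmul (qZ Q) (qW Q) a b) + qsqnorm (qmul (qX Q) (qY Q) a b)
    + qsqnorm (qmul (qU Q) (qV Q) a b) < 0.

Definition U_pq : set (HQ p r) := [set Q | inU Q].

Definition qinvertible (G1 G2 : 'M[C]_p) : Prop :=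
  exists H1 H2 : 'M[C]_p,
    qmul G1 G2 H1 H2 = (1%:M, 0) /\ qmul H1 H2 G1 G2 = (1%:M, 0).

Definition ract (Q : HQ p r) (G1 G2 : 'M[C]_p) : HQ p r :=
  let Z := qmul (qZ Q) (qW Q) G1 G2 in
  let X := qmul (qX Q) (qY Q) G1 G2 in
  let U := qmul (qU Q) (qV Q) G1 G2 in
  mkHQ Z.1 Z.2 X.1 X.2 U.1 U.2.

Definition PhiDen (Q : HQ p r) : 'M[C]_(p + p) :=
  block_mx (qZ Q - qX Q) (qW Q - qY Q)
           (mconj (qY Q) - mconj (qW Q)) (mconj (qZ Q) - mconj (qX Q)).

Definition Phi (Q : HQ p r) : 'M[C]_(r, p + p) :=
  row_mx (qU Q) (qV Q) *m invmx (PhiDen Q).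

Definition addHQ (Q E : HQ p r) (t : R) : HQ p r :=
  mkHQ (qZ Q + (real_complex R t) *: qZ E) (qW Q + (real_complex R t) *: qW E) (qX Q + (real_complex R t) *: qX E)
       (qY Q + (real_complex R t) *: qY E) (qU Q + (real_complex R t) *: qU E) (qV Q + (real_complex R t) *: qV E).

Definition cderive (g : R -> C) : C :=
  Complex (derive1 (fun t => complex.Re (g t)) 0) (derive1 (fun t => complex.Im (g t)) 0).
Definition cderivable (g : R -> C) : Prop :=
  derivable (fun t => complex.Re (g t)) 0 1 /\ derivable (fun t => complex.Im (g t)) 0 1.

Definition pd (f : HQ p r -> C) (Q E : HQ p r) : C := cderive (fun t => f (addHQ Q E t)).
Definition pd2 (f : HQ p r -> C) (Q E : HQ p r) : C :=
  cderive (fun t => pd f (addHQ Q E t) E).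

(* real coordinate directions: real part (c = 1) / imaginary part (c = 'i)
   of the (i,j) entry of one of the blocks *)
Definition EZ (i j : 'I_p) (c : C) := mkHQ (c *: delta_mx i j) 0 0 0 (0 : 'M[C]_(r, p)) 0.
Definition EW (i j : 'I_p) (c : C) := mkHQ 0 (c *: delta_mx i j) 0 0 (0 : 'M[C]_(r, p)) 0.
Definition EX (i j : 'I_p) (c : C) := mkHQ 0 0 (c *: delta_mx i j) 0 (0 : 'M[C]_(r, p)) 0.
Definition EY (i j : 'I_p) (c : C) := mkHQ 0 0 0 (c *: delta_mx i j) (0 : 'M[C]_(r, p)) 0.
Definition EU (i : 'I_r) (j : 'I_p) (c : C) := mkHQ 0 0 0 0 (c *: delta_mx i j) 0.
Definition EV (i : 'I_r) (j : 'I_p) (c : C) := mkHQ 0 0 0 0 0 (c *: delta_mx i j).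

Definition units : seq C := [:: 1; Complex 0 1].

(* a generic bilinear "metric contraction" over the coordinate directions with
   signature -|dZ|^2 - |dW|^2 + |dX|^2 + |dY|^2 + |dU|^2 + |dV|^2 *)
Definition metric_sum (F : HQ p r -> C) : C :=
  \sum_(i < p) \sum_(j < p) \sum_(c <- units)
      (- F (EZ i j c) - F (EW i j c) + F (EX i j c) + F (EY i j c))
  + \sum_(i < r) \sum_(j < p) \sum_(c <- units) (F (EU i j c) + F (EV i j c)).

Definition tau (f : HQ p r -> C) (Q : HQ p r) : C := metric_sum (pd2 f Q).
Definition kappa (f g : HQ p r -> C) (Q : HQ p r) : C :=
  metric_sum (fun E => pd f Q E * pd g Q E).

Definition derivable2_on (A : set (HQ p r)) (f : HQ p r -> C) : Prop :=
  forall Q E, A Q ->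
    cderivable (fun t => f (addHQ Q E t)) /\
    cderivable (fun t => pd f (addHQ Q E t) E).

Definition orthogonal_harmonic_family (A : set (HQ p r)) (I : Type)
  (F : I -> HQ p r -> C) : Prop :=
  (forall k, derivable2_on A (F k)) /\
  (forall k Q, A Q -> tau (F k) Q = 0) /\
  (forall k l Q, A Q -> kappa (F k) (F l) Q = 0).

End Defs.

(* Main.v *)
Require Import Defs.
From HB Require Import structures.
From mathcomp Require Import all_boot all_order all_algebra.
From mathcomp Require Import all_classical all_reals all_analysis.
From mathcomp Require Import complex.
From mathcomp Require Import ring lra.
Set Implicit Arguments. Unset Strict Implicit. Unset Printing Implicit Defensive.
Import Order.TTheory GRing.Theory Num.Theory.
Import numFieldNormedType.Exports.
Local Open Scope ring_scope.
Local Open Scope classical_set_scope.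

Section An.
Variable R : realType.

Definition ratR (P G : {poly R}) (u : R) : R := P.[u] / G.[u].
Definition dP (P G : {poly R}) : {poly R} := P^`() * G - P * G^`().

Lemma ratR_is_derive (P G : {poly R}) (x : R) : G.[x] != 0 ->
  is_derive x (1:R) (ratR P G) (ratR (dP P G) (G * G) x).
Proof.
move=> Gx.
have H1 := is_derive_poly P x.
have H2 := is_deriveV Gx (is_derive_poly G x).
have H3 := is_deriveM H1 H2.
have -> : ratR P G = (horner P * (fun y => (G.[y])^-1))%R.
  by apply/funext => y; rewrite /ratR.
apply: is_derive_eq H3 _.
rewrite /ratR /dP !hornerE /=. rewrite /GRing.scale /=. field.
by rewrite Gx.
Qed.

Lemma near_neq (G : {poly R}) (x : R) : G.[x] != 0 -> \forall u \near x, G.[u] != 0.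
Proof.
move=> Gx.
have H : nbhs G.[x] [set y : R | y != 0].
  apply: open_nbhs_nbhs; split; first exact: open_neq.
  exact: Gx.
exact: (@continuous_horner R G x _ H).
Qed.


Lemma is_derive_shiftx (h : R -> R) (x d : R) :
  is_derive x (1:R) h d -> is_derive (0:R) (1:R) (fun s => h (x + s)) d.
Proof.
move=> H.
have H' : is_derive ((fun s : R => x + s) 0) (1:R) h d by rewrite /= addr0.
have Hs : is_derive (0:R) (1:R) (fun s : R => x + s) 1.
  have := @is_deriveD _ _ _ (cst x) id 0 1 0 1 _ _.
  rewrite add0r. apply; apply: is_derive_cst || apply: is_derive_id.
have := is_derive1_comp H' Hs.
by rewrite mulr1.
Qed.

Lemma is_derive_reflx (h : R -> R) (x d : R) :
  is_derive x (1:R) h d -> is_derive (0:R) (1:R) (fun s => h (x - s)) (- d).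
Proof.
move=> H.
have H' : is_derive ((fun s : R => x - s) 0) (1:R) h d by rewrite /= subr0.
have Hs : is_derive (0:R) (1:R) (fun s : R => x - s) (-1).
  have := @is_deriveB _ _ _ (cst x) id 0 1 0 1 _ _.
  rewrite sub0r. apply; apply: is_derive_cst || apply: is_derive_id.
have := @is_derive1_comp R h (fun s : R => x - s) 0 d (-1) H' Hs.
by rewrite mulrN1.
Qed.


Record rf := RF { rP1 : {poly R}; rP2 : {poly R}; rG : {poly R} }.
Definition evr (f : rf) (u : R) : R[i] := Complex (ratR (rP1 f) (rG f) u) (ratR (rP2 f) (rG f) u).
Definition drf (f : rf) : rf := RF (dP (rP1 f) (rG f)) (dP (rP2 f) (rG f)) (rG f * rG f).

Lemma rf_derive (g : R -> R[i]) f x : (rG f).[x] != 0 ->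
  (\forall u \near x, g u = evr f u) ->
  is_derive x (1:R) (fun u => complex.Re (g u)) (complex.Re (evr (drf f) x)) /\
  is_derive x (1:R) (fun u => complex.Im (g u)) (complex.Im (evr (drf f) x)).
Proof.
move=> Gx Hn; split.
- apply: near_eq_is_derive (ratR_is_derive (rP1 f) Gx).
  by apply: filterS Hn => u ->.
- apply: near_eq_is_derive (ratR_is_derive (rP2 f) Gx).
  by apply: filterS Hn => u ->.
Qed.

Lemma cd_shift (g : R -> R[i]) f x : (rG f).[x] != 0 ->
  (\forall u \near x, g u = evr f u) ->
  cderivable (fun s => g (x + s)) /\ cderive (fun s => g (x + s)) = evr (drf f) x.
Proof.
move=> Gx Hn; have [H1 H2] := rf_derive Gx Hn.
have K1 := is_derive_shiftx H1; have K2 := is_derive_shiftx H2.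
split; first by split; [case: K1|case: K2].
case: K1 => _ E1; case: K2 => _ E2.
rewrite /cderive !derive1E E1 E2.
by case: (evr (drf f) x).
Qed.

Lemma cd_refl (g : R -> R[i]) f x : (rG f).[x] != 0 ->
  (\forall u \near x, g u = evr f u) ->
  cderive (fun s => g (x - s)) = - evr (drf f) x.
Proof.
move=> Gx Hn; have [H1 H2] := rf_derive Gx Hn.
have K1 := is_derive_reflx H1; have K2 := is_derive_reflx H2.
case: K1 => _ E1; case: K2 => _ E2.
rewrite /cderive !derive1E E1 E2.
by case: (evr (drf f) x).
Qed.


Lemma cderive_near (g h : R -> R[i]) : (\forall t \near 0, g t = h t) -> cderive g = cderive h.
Proof.
move=> H; rewrite /cderive !derive1E; congr Complex; apply: near_eq_derive;
  by apply: filterS H => t ->.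
Qed.

Lemma cderivable_near (g h : R -> R[i]) : (\forall t \near 0, g t = h t) ->
  cderivable h -> cderivable g.
Proof.
move=> H [H1 H2]; split.
- apply: (near_eq_derivable _ H1); by apply: filterS H => t ->.
- apply: (near_eq_derivable _ H2); by apply: filterS H => t ->.
Qed.

Definition good (psi : R -> R[i]) (f : rf) :=
  (rG f).[0] != 0 /\ forall u, (rG f).[u] != 0 -> psi u = evr f u.

Lemma good_near psi f x : good psi f -> (rG f).[x] != 0 -> \forall u \near x, psi u = evr f u.
Proof.
move=> [_ H] Gx; apply: filterS (near_neq Gx) => u; exact: H.
Qed.

Lemma G1 psi f : good psi f -> cderivable psi /\ cderive psi = evr (drf f) 0.
Proof.
move=> g; have := cd_shift g.1 (good_near g g.1).
by have -> : (fun s => psi (0 + s)) = psi by apply/funext => s; rewrite add0r.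
Qed.

Lemma G2 psi f : good psi f ->
  \forall t \near 0, cderive (fun s => psi (t + s)) = evr (drf f) t.
Proof.
move=> g; apply: filterS (near_neq g.1) => t Gt.
exact: (cd_shift Gt (good_near g Gt)).2.
Qed.

Lemma G3 psi f : good psi f ->
  cderivable (fun t => cderive (fun s => psi (t + s))) /\
  cderive (fun t => cderive (fun s => psi (t + s))) = evr (drf (drf f)) 0.
Proof.
move=> g.
have G0 : (rG (drf f)).[0] != 0 by rewrite /= hornerM mulf_neq0 // g.1.
have T0 : \forall u \near (0:R), evr (drf f) u = evr (drf f) u by apply: filterE.
have [D E] := cd_shift G0 T0.
have e0 : (fun s => evr (drf f) (0 + s)) = evr (drf f) by apply/funext => s; rewrite add0r.
rewrite e0 in D E.
have N := G2 g.
split; first exact: cderivable_near N D.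
by rewrite (cderive_near N) E.
Qed.

Definition negf (f : rf) := RF (- rP1 f) (- rP2 f) (rG f).

Lemma evr_neg f u : evr (negf f) u = - evr f u.
Proof. by rewrite /evr /ratR /= !hornerN !mulNr. Qed.

Lemma drf_neg f : drf (negf f) = negf (drf f).
Proof. by rewrite /drf /negf /dP /= !derivN; congr RF; ring. Qed.

Lemma G4 psi f : good psi f -> cderive (fun s => psi (- s)) = - evr (drf f) 0.
Proof.
move=> g; have := cd_refl g.1 (good_near g g.1).
by have -> : (fun s => psi (0 - s)) = (fun s => psi (- s)) by apply/funext => s; rewrite sub0r.
Qed.

Lemma G5 psi f : good psi f ->
  cderive (fun t => cderive (fun s => psi (- t - s))) = evr (drf (drf f)) 0.
Proof.
move=> g.
have Gc : (rG f \Po (- 'X)).[0] != 0 by rewrite horner_comp !hornerE oppr0 g.1.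
have N : \forall t \near 0, cderive (fun s => psi (- t - s)) = evr (negf (drf f)) (0 - t).
  apply: filterS (near_neq Gc) => t; rewrite horner_comp !hornerE => Gt.
  by rewrite (cd_refl Gt (good_near g Gt)) evr_neg ?sub0r.
rewrite (cderive_near N).
have G0 : (rG (negf (drf f))).[0] != 0 by rewrite /= hornerM mulf_neq0 // g.1.
have T0 : \forall u \near (0:R), evr (negf (drf f)) u = evr (negf (drf f)) u by apply: filterE.
rewrite (cd_refl G0 T0).
by rewrite drf_neg evr_neg opprK.
Qed.

End An.

Local Close Scope classical_set_scope.
Local Open Scope complex_scope.

Section Alg.
Variable R : realType.
Local Notation C := (R[i]).

Lemma Re_mulr (c : C) (x : R) : complex.Re (c * x%:C) = complex.Re c * x.
Proof. by case: c => a b /=; simpc. Qed.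
Lemma Im_mulr (c : C) (x : R) : complex.Im (c * x%:C) = complex.Im c * x.
Proof. by case: c => a b /=; simpc. Qed.

Lemma Re_horner (P : {poly C}) (u : R) :
  complex.Re P.[u%:C] = (map_poly (@complex.Re R) P).[u].
Proof.
rewrite /map_poly !(horner_coef_wide _ (size_poly _ _)) horner_coef.
rewrite raddf_sum; apply: eq_bigr => i _.
by rewrite coef_poly ltn_ord -rmorphXn; exact: Re_mulr.
Qed.

Lemma Im_horner (P : {poly C}) (u : R) :
  complex.Im P.[u%:C] = (map_poly (@complex.Im R) P).[u].
Proof.
rewrite /map_poly !(horner_coef_wide _ (size_poly _ _)) horner_coef.
rewrite raddf_sum; apply: eq_bigr => i _.
by rewrite coef_poly ltn_ord -rmorphXn; exact: Im_mulr.
Qed.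

Lemma div_complex (a1 a2 b1 b2 : R) : b1 * b1 + b2 * b2 != 0 ->
  Complex a1 a2 / Complex b1 b2 =
  Complex ((a1 * b1 + a2 * b2) / (b1 * b1 + b2 * b2)) ((a2 * b1 - a1 * b2) / (b1 * b1 + b2 * b2)).
Proof.
move=> nz.
have Bnz : Complex b1 b2 != 0.
  apply: contraNneq nz => /eqP; rewrite eq_complex /= => /andP[/eqP -> /eqP ->].
  by rewrite mulr0 addr0.
set n := b1 * b1 + b2 * b2.
set X := Complex ((a1 * b1 + a2 * b2) / n) ((a2 * b1 - a1 * b2) / n).
suff <- : X * Complex b1 b2 = Complex a1 a2 by rewrite mulfK.
rewrite /X; simpc.
by congr Complex; rewrite /n; field.
Qed.


Lemma sumsq_neq0 (c : C) : c != 0 -> complex.Re c * complex.Re c + complex.Im c * complex.Im c != 0.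
Proof.
case: c => b1 b2 /= Bnz; apply: contraNneq Bnz => H.
have s1 := sqr_ge0 b1; have s2 := sqr_ge0 b2; rewrite expr2 in s1; rewrite expr2 in s2.
have := paddr_eq0 s1 s2; rewrite H eqxx => /esym/andP[h1 h2].
move: h1; rewrite mulf_eq0 orbb => /eqP ->.
by move: h2; rewrite mulf_eq0 orbb => /eqP ->.
Qed.

Lemma heval_lin k l (A0 A1 : 'M[C]_(k, l)) (u : R) :
  map_mx (horner_eval u%:C) (map_mx polyC A0 + 'X *: map_mx polyC A1) = A0 + u%:C *: A1.
Proof. by apply/matrixP => i j; rewrite !mxE /horner_eval !hornerE mulrC. Qed.

Lemma good_entry m n (N0 N1 : 'M[C]_(m, n)) (M0 M1 : 'M[C]_n) a b : M0 \in unitmx ->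
  exists f, good (fun u : R => ((N0 + u%:C *: N1) *m invmx (M0 + u%:C *: M1)) a b) f.
Proof.
move=> M0u.
pose MX : 'M[{poly C}]_n := map_mx polyC M0 + 'X *: map_mx polyC M1.
pose NX : 'M[{poly C}]_(m, n) := map_mx polyC N0 + 'X *: map_mx polyC N1.
pose A := (NX *m \adj MX) a b; pose B := \det MX.
have HB : forall u : R, B.[u%:C] = \det (M0 + u%:C *: M1).
  by move=> u; rewrite -(heval_lin M0 M1 u) det_map_mx.
have HA : forall u : R, A.[u%:C] = ((N0 + u%:C *: N1) *m \adj (M0 + u%:C *: M1)) a b.
  by move=> u; rewrite -(heval_lin M0 M1 u) -(heval_lin N0 N1 u) -map_mx_adj -map_mxM mxE.
have key : forall u : R, B.[u%:C] != 0 ->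
   ((N0 + u%:C *: N1) *m invmx (M0 + u%:C *: M1)) a b = A.[u%:C] / B.[u%:C].
  move=> u; rewrite HA HB => nz.
  rewrite /invmx unitmxE unitfE nz -scalemxAr mxE mulrC //.
pose Ar := map_poly (@complex.Re R) A; pose Ai := map_poly (@complex.Im R) A.
pose Br := map_poly (@complex.Re R) B; pose Bi := map_poly (@complex.Im R) B.
exists (RF (Ar * Br + Ai * Bi) (Ai * Br - Ar * Bi) (Br * Br + Bi * Bi)).
have cA : forall u : R, A.[u%:C] = Complex Ar.[u] Ai.[u].
  by move=> u; rewrite /Ar /Ai -Re_horner -Im_horner; case: (A.[u%:C]).
have cB : forall u : R, B.[u%:C] = Complex Br.[u] Bi.[u].
  by move=> u; rewrite /Br /Bi -Re_horner -Im_horner; case: (B.[u%:C]).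
have GB : forall u : R, (Br * Br + Bi * Bi).[u] != 0 -> B.[u%:C] != 0.
  move=> u; rewrite cB hornerD !hornerM; apply: contraNneq => /eqP.
  by rewrite eq_complex /= => /andP[/eqP -> /eqP ->]; rewrite mulr0 addr0.
split.
  have := sumsq_neq0 (c := B.[(0:R)%:C]).
  rewrite cB /= hornerD !hornerM; apply.
  by rewrite -cB HB scale0r addr0 -unitfE -unitmxE.
move=> u /= Gu.
rewrite (key u (GB u Gu)) cA cB div_complex; last by rewrite hornerD !hornerM in Gu.
by rewrite /evr /ratR /= !(hornerD, hornerM, hornerN).
Qed.

End Alg.

Section Main.
Variable R : realType.
Local Notation C := (R[i]).
Variables p r : nat.
Implicit Types Q E : HQ R p r.

Lemma mconjD m n (A B : 'M[C]_(m, n)) : mconj (A + B) = mconj A + mconj B.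
Proof. exact: map_mxD. Qed.
Lemma mconjN m n (A : 'M[C]_(m, n)) : mconj (- A) = - mconj A.
Proof. exact: map_mxN. Qed.
Lemma mconjB m n (A B : 'M[C]_(m, n)) : mconj (A - B) = mconj A - mconj B.
Proof. exact: map_mxB. Qed.
Lemma mconjZr m n (A : 'M[C]_(m, n)) (u : R) : mconj (u%:C *: A) = u%:C *: mconj A.
Proof. by apply/matrixP => i j; rewrite !mxE rmorphM /= oppr0. Qed.
Lemma mconj0 m n : mconj (0 : 'M[C]_(m, n)) = 0.
Proof. exact: map_mx0. Qed.

Lemma PhiDen_add Q E u : PhiDen (addHQ Q E u) = PhiDen Q + u%:C *: PhiDen E.
Proof.
rewrite /PhiDen /= scale_block_mx add_block_mx !mconjD !mconjZr.
congr block_mx; rewrite ?scalerBr;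
by rewrite opprD addrACA.
Qed.

Lemma Nrow_add Q E u : row_mx (qU (addHQ Q E u)) (qV (addHQ Q E u)) =
  row_mx (qU Q) (qV Q) + u%:C *: row_mx (qU E) (qV E).
Proof. by rewrite /= scale_row_mx add_row_mx. Qed.

Lemma Phi_add Q E u : Phi (addHQ Q E u) =
  (row_mx (qU Q) (qV Q) + u%:C *: row_mx (qU E) (qV E)) *m invmx (PhiDen Q + u%:C *: PhiDen E).
Proof. by rewrite /Phi PhiDen_add Nrow_add. Qed.

Lemma good_Phi Q E a b : PhiDen Q \in unitmx ->
  exists f, good (fun u : R => Phi (addHQ Q E u) a b) f.
Proof.
move=> Hu; have [f gf] := good_entry (row_mx (qU Q) (qV Q)) (row_mx (qU E) (qV E)) (PhiDen E) a b Hu.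
by exists f; move: gf; congr good; apply/funext => u; rewrite Phi_add.
Qed.

Lemma addHQ_add Q E t s : addHQ (addHQ Q E t) E s = addHQ Q E (t + s).
Proof. by rewrite /addHQ /= rmorphD; congr mkHQ; rewrite scalerDl addrA. Qed.

Lemma Phi_congr Q Q' : qZ Q - qX Q = qZ Q' - qX Q' -> qW Q - qY Q = qW Q' - qY Q' ->
  qU Q = qU Q' -> qV Q = qV Q' -> Phi Q = Phi Q'.
Proof.
move=> h1 h2 h3 h4; rewrite /Phi /PhiDen h1 h2 h3 h4.
rewrite -!mconjB -(opprB (qW Q)) -(opprB (qW Q')) h2.
by rewrite h1.
Qed.


Lemma rcN (t : R) : (- t)%:C = - (t%:C) :> C.
Proof. by apply/eqP; rewrite eq_complex /= oppr0 !eqxx. Qed.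

Lemma Phi_XZ Q i j c t : Phi (addHQ Q (EX r i j c) t) = Phi (addHQ Q (EZ r i j c) (- t)).
Proof.
apply: Phi_congr => /=; rewrite ?scaler0 ?addr0 //.
by rewrite rcN scaleNr opprD addrA addrAC.
Qed.

Lemma Phi_YW Q i j c t : Phi (addHQ Q (EY r i j c) t) = Phi (addHQ Q (EW r i j c) (- t)).
Proof.
apply: Phi_congr => /=; rewrite ?scaler0 ?addr0 //.
by rewrite rcN scaleNr opprD addrA addrAC.
Qed.


Lemma aff (a b : R) : derive1 (fun s : R => a + s * b) 0 = b.
Proof.
have H : is_derive (0:R) (1:R) (fun s : R => a + s * b) b.
  have -> : (fun s : R => a + s * b) = cst a + ( *%R ^~ b) by apply/funext.
  apply: is_derive_eq.
  by rewrite add0r scale0r add0r; exact: mulr1.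
by rewrite derive1E; case: H.
Qed.

Lemma cderive_affine (x0 w : C) : cderive (fun s : R => x0 + s%:C * w) = w.
Proof.
rewrite /cderive.
have -> : (fun t : R => complex.Re (x0 + t%:C * w)) = (fun t => complex.Re x0 + t * complex.Re w).
  by apply/funext => t; case: x0 => ? ?; case: w => ? ? /=; simpc.
have -> : (fun t : R => complex.Im (x0 + t%:C * w)) = (fun t => complex.Im x0 + t * complex.Im w).
  by apply/funext => t; case: x0 => ? ?; case: w => ? ? /=; simpc.
by rewrite !aff; case: w.
Qed.

Lemma cderive_cst (k : C) : cderive (fun _ : R => k) = 0.
Proof.
have := cderive_affine k 0.
by have -> : (fun s : R => k + s%:C * 0) = (fun _ => k) by apply/funext => s; rewrite mulr0 addr0.
Qed.

Lemma PhiDen_EU i j c : PhiDen (EU i j c : HQ R p r) = 0.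
Proof. by rewrite /PhiDen /= !subrr block_mx0. Qed.
Lemma PhiDen_EV i j c : PhiDen (EV i j c : HQ R p r) = 0.
Proof. by rewrite /PhiDen /= !subrr block_mx0. Qed.

Lemma Phi_U Q i j c s : Phi (addHQ Q (EU i j c) s) =
  Phi Q + s%:C *: (row_mx (c *: delta_mx i j) 0 *m invmx (PhiDen Q)).
Proof. by rewrite Phi_add PhiDen_EU scaler0 addr0 mulmxDl -scalemxAl. Qed.
Lemma Phi_V Q i j c s : Phi (addHQ Q (EV i j c) s) =
  Phi Q + s%:C *: (row_mx 0 (c *: delta_mx i j) *m invmx (PhiDen Q)).
Proof. by rewrite Phi_add PhiDen_EV scaler0 addr0 mulmxDl -scalemxAl. Qed.

Lemma PhiDen_addU Q i j c s : PhiDen (addHQ Q (EU i j c) s) = PhiDen Q.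
Proof. by rewrite PhiDen_add PhiDen_EU scaler0 addr0. Qed.
Lemma PhiDen_addV Q i j c s : PhiDen (addHQ Q (EV i j c) s) = PhiDen Q.
Proof. by rewrite PhiDen_add PhiDen_EV scaler0 addr0. Qed.

Lemma pd_U Q i j c a b : pd (fun Q => Phi Q a b) Q (EU i j c) =
  (row_mx (c *: delta_mx i j) 0 *m invmx (PhiDen Q)) a b.
Proof.
rewrite /pd; under eq_fun do rewrite Phi_U !mxE.
rewrite [RHS]mxE; exact: cderive_affine.
Qed.
Lemma pd_V Q i j c a b : pd (fun Q => Phi Q a b) Q (EV i j c) =
  (row_mx 0 (c *: delta_mx i j) *m invmx (PhiDen Q)) a b.
Proof.
rewrite /pd; under eq_fun do rewrite Phi_V !mxE.
rewrite [RHS]mxE; exact: cderive_affine.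
Qed.

Lemma pd2_U Q i j c a b : pd2 (fun Q => Phi Q a b) Q (EU i j c) = 0.
Proof.
rewrite /pd2; under eq_fun do rewrite pd_U PhiDen_addU.
exact: cderive_cst.
Qed.
Lemma pd2_V Q i j c a b : pd2 (fun Q => Phi Q a b) Q (EV i j c) = 0.
Proof.
rewrite /pd2; under eq_fun do rewrite pd_V PhiDen_addV.
exact: cderive_cst.
Qed.


End Main.

Section Main2.
Variable R : realType.
Local Notation C := (R[i]).
Variables p r : nat.
Implicit Types Q E : HQ R p r.

Lemma pd_pair (F : HQ R p r -> C) Q E E' f :
  good (fun u => F (addHQ Q E u)) f ->
  (forall Q' t, F (addHQ Q' E' t) = F (addHQ Q' E (- t))) ->
  pd F Q E' = - pd F Q E /\ pd2 F Q E' = pd2 F Q E.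
Proof.
move=> g HE.
pose psi := fun u : R => F (addHQ Q E u).
have e1 : (fun t : R => F (addHQ Q E' t)) = (fun t => psi (- t)).
  by apply/funext => t; rewrite /psi HE.
have e2 : (fun t : R => pd F (addHQ Q E' t) E') =
          (fun t => cderive (fun s => psi (- t - s))).
  apply/funext => t; rewrite /pd; congr cderive; apply/funext => s.
  by rewrite /psi addHQ_add HE -opprD.
have e3 : (fun t : R => pd F (addHQ Q E t) E) =
          (fun t => cderive (fun s => psi (t + s))).
  apply/funext => t; rewrite /pd; congr cderive; apply/funext => s.
  by rewrite /psi addHQ_add.
split.
  by rewrite /pd e1 (G4 g) (G1 g).2.
have L : pd2 F Q E' = evr (drf (drf f)) 0 by rewrite /pd2 e2 (G5 g).
have Rr : pd2 F Q E = evr (drf (drf f)) 0 by rewrite /pd2 e3 (G3 g).2.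
by rewrite L Rr.
Qed.

End Main2.

Section Main3.
Variable R : realType.
Local Notation C := (R[i]).
Variables p r : nat.
Implicit Types Q E : HQ R p r.

Lemma mconjM m n k (A : 'M[C]_(m, n)) (B : 'M[C]_(n, k)) : mconj (A *m B) = mconj A *m mconj B.
Proof. exact: map_mxM. Qed.
Lemma mconjK m n (A : 'M[C]_(m, n)) : mconj (mconj A) = A.
Proof. by apply/matrixP => i j; rewrite !mxE conjcK. Qed.

Lemma sqnorm_ge0 n (v : 'cV[C]_n) : 0 <= sqnorm v.
Proof. by apply: sumr_ge0 => i _; apply: addr_ge0; apply: sqr_ge0. Qed.
Lemma qsqnorm_ge0 n (ab : 'cV[C]_n * 'cV[C]_n) : 0 <= qsqnorm ab.
Proof. by apply: addr_ge0; apply: sqnorm_ge0. Qed.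

Lemma zmod4 (V : zmodType) (a b c d : V) : (-a + b) - (-c + d) = - ((d - b) + (a - c)).
Proof. by rewrite !opprD !opprK [LHS]addrACA [RHS]addrC [- d + b]addrC. Qed.

Lemma unitU Q : U_pq Q -> PhiDen Q \in unitmx.
Proof.
move=> HU; rewrite unitmxE unitfE -det_tr.
apply/negP => /det0P [v vn0 Hv].
have Hw : PhiDen Q *m v^T = 0 by rewrite -(trmxK (PhiDen Q)) -trmx_mul Hv trmx0.
pose x := usubmx v^T; pose y := dsubmx v^T.
have Hxy : col_mx x y = v^T by rewrite vsubmxK.
move: Hw; rewrite -Hxy /PhiDen mul_block_col => /eqP; rewrite col_mx_eq0 => /andP[/eqP H1 /eqP H2].
pose a := x; pose b := - mconj y.
have E1 : qmul (qZ Q) (qW Q) a b = qmul (qX Q) (qY Q) a b.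
  rewrite /qmul /a /b mconjN mconjK; congr pair.
    apply/eqP; rewrite -subr_eq0; apply/eqP; rewrite -[RHS]H1.
    by rewrite !mulmxN !opprK !mulmxBl opprD addrACA.
  apply/eqP; rewrite -subr_eq0; apply/eqP.
  have := congr1 (@mconj _ _ _) H2; rewrite mconjD !mconjM !mconjB !mconjK mconj0.
  move=> H3; rewrite -[RHS]oppr0 -[in RHS]H3.
  by rewrite !mulmxN !mulmxBl zmod4.
have nz : (a, b) != (0, 0).
  apply: contraNneq vn0 => [[a0 b0]].
  have y0 : y = 0 by rewrite -(mconjK y) -(opprK (mconj y)) -/b b0 oppr0 mconj0.
  by rewrite -(trmxK v) -Hxy -/a a0 y0 col_mx0 trmx0.
have := HU a b nz; rewrite E1 addNr add0r.
by rewrite ltNge qsqnorm_ge0.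
Qed.


Definition rep (A B : 'M[C]_p) : 'M[C]_(p + p) := block_mx A B (- mconj B) (mconj A).

Lemma rep_mul (A B G1 G2 : 'M[C]_p) :
  rep A B *m rep G1 G2 = rep (qmul A B G1 G2).1 (qmul A B G1 G2).2.
Proof.
rewrite /rep mulmx_block /qmul /=; congr block_mx.
- by rewrite mulmxN.
- by rewrite mconjD !mconjM mconjK mulNmx mulmxN opprD addrC.
- by rewrite mconjB !mconjM mconjK mulNmx addrC.
Qed.

Lemma PhiDen_rep Q : PhiDen Q = rep (qZ Q - qX Q) (qW Q - qY Q).
Proof. by rewrite /PhiDen /rep !mconjB opprB. Qed.

Lemma zmod4b (V : zmodType) (a b c d : V) : (a - b) - (c - d) = (a - c) - (b - d).
Proof. by rewrite !opprD !opprK addrACA. Qed.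

Lemma PhiDen_ract Q G1 G2 : PhiDen (ract Q G1 G2) = PhiDen Q *m rep G1 G2.
Proof.
rewrite !PhiDen_rep rep_mul /ract /qmul /=.
rewrite !mulmxBl zmod4b; congr rep; by rewrite opprD addrACA.
Qed.

Lemma row_ract Q G1 G2 : row_mx (qU (ract Q G1 G2)) (qV (ract Q G1 G2)) =
  row_mx (qU Q) (qV Q) *m rep G1 G2.
Proof. by rewrite /rep mul_row_block /ract /qmul /= mulmxN. Qed.

Lemma rep1 : rep 1%:M 0 = 1%:M.
Proof. by rewrite /rep mconj0 oppr0 /mconj map_mx1 -scalar_mx_block. Qed.

Lemma Phi_ract Q G1 G2 : PhiDen Q \in unitmx -> qinvertible G1 G2 ->
  Phi (ract Q G1 G2) = Phi Q.
Proof.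
move=> Mu [H1 [H2 [e1 e2]]].
have RGH : rep G1 G2 *m rep H1 H2 = 1%:M by rewrite rep_mul e1 rep1.
have RGu := (mulmx1_unit RGH).1.
have MRu : PhiDen Q *m rep G1 G2 \in unitmx by rewrite unitmx_mul Mu RGu.
rewrite /Phi PhiDen_ract row_ract -mulmxA.
congr (_ *m _).
set X := invmx (PhiDen Q *m rep G1 G2).
have h : PhiDen Q *m (rep G1 G2 *m X) = 1%:M by rewrite mulmxA mulmxV.
by rewrite -[LHS]mul1mx -(mulVmx Mu) -mulmxA h mulmx1.
Qed.

End Main3.

Section Main4.
Variable R : realType.
Local Notation C := (R[i]).
Variables p r : nat.
Implicit Types Q E : HQ R p r.

Lemma deriv2_of_good (F : HQ R p r -> C) Q E f : good (fun u => F (addHQ Q E u)) f ->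
  cderivable (fun t => F (addHQ Q E t)) /\ cderivable (fun t => pd F (addHQ Q E t) E).
Proof.
move=> g; split; first exact: (G1 g).1.
have e3 : (fun t : R => pd F (addHQ Q E t) E) =
          (fun t => cderive (fun s => (fun u => F (addHQ Q E u)) (t + s))).
  apply/funext => t; rewrite /pd; congr cderive; apply/funext => s.
  by rewrite addHQ_add.
rewrite e3; exact: (G3 g).1.
Qed.

Lemma rowZ_U (c : C) i j (M : 'M[C]_(p + p)) a b :
  (row_mx (c *: delta_mx i j) (0 : 'M[C]_(r, p)) *m M) a b =
  c * (row_mx (delta_mx i j) (0 : 'M[C]_(r, p)) *m M) a b.
Proof. by rewrite -[X in row_mx _ X](scaler0 _ c) -scale_row_mx -scalemxAl mxE. Qed.

Lemma rowZ_V (c : C) i j (M : 'M[C]_(p + p)) a b :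
  (row_mx (0 : 'M[C]_(r, p)) (c *: delta_mx i j) *m M) a b =
  c * (row_mx (0 : 'M[C]_(r, p)) (delta_mx i j) *m M) a b.
Proof. by rewrite -[X in row_mx X _](scaler0 _ c) -scale_row_mx -scalemxAl mxE. Qed.

Lemma ii_sum (x y z w : C) :
  1 * x * (1 * y) + 1 * z * (1 * w) + ((Complex 0 1 * x * (Complex 0 1 * y) + Complex 0 1 * z * (Complex 0 1 * w)) + 0) = 0.
Proof.
have ii : Complex 0 1 * Complex 0 1 = -1 :> C by simpc.
rewrite !mul1r addr0 [Complex 0 1 * x * _]mulrACA [Complex 0 1 * z * _]mulrACA ii !mulN1r.
by rewrite -opprD subrr.
Qed.

Lemma pairXZ a b Q i j c : PhiDen Q \in unitmx ->
  pd (fun Q => Phi Q a b) Q (EX r i j c) = - pd (fun Q => Phi Q a b) Q (EZ r i j c) /\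
  pd2 (fun Q => Phi Q a b) Q (EX r i j c) = pd2 (fun Q => Phi Q a b) Q (EZ r i j c).
Proof.
move=> Hu; have [f g] := good_Phi (EZ r i j c) a b Hu.
apply: (pd_pair (F := fun Q => Phi Q a b) g).
by move=> Q' t; rewrite Phi_XZ.
Qed.

Lemma pairYW a b Q i j c : PhiDen Q \in unitmx ->
  pd (fun Q => Phi Q a b) Q (EY r i j c) = - pd (fun Q => Phi Q a b) Q (EW r i j c) /\
  pd2 (fun Q => Phi Q a b) Q (EY r i j c) = pd2 (fun Q => Phi Q a b) Q (EW r i j c).
Proof.
move=> Hu; have [f g] := good_Phi (EW r i j c) a b Hu.
apply: (pd_pair (F := fun Q => Phi Q a b) g).
by move=> Q' t; rewrite Phi_YW.
Qed.

Lemma canc (a b : C) : - a - b + a + b = 0.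
Proof. ring. Qed.

Lemma kcanc (a a' b b' c c' d d' : C) : a' = - a -> b' = - b -> c' = - c -> d' = - d ->
  - (a * c) - (b * d) + a' * c' + b' * d' = 0.
Proof. by move=> -> -> -> ->; rewrite !mulrNN; exact: canc. Qed.

Lemma tcanc (a a' b b' : C) : a' = a -> b' = b -> - a - b + a' + b' = 0.
Proof. by move=> -> ->; exact: canc. Qed.

Lemma pd_U' Q i j c a b : pd (fun Q => Phi Q a b) Q (EU i j c) =
  c * (row_mx (delta_mx i j) (0 : 'M[C]_(r, p)) *m invmx (PhiDen Q)) a b.
Proof. by rewrite pd_U rowZ_U. Qed.
Lemma pd_V' Q i j c a b : pd (fun Q => Phi Q a b) Q (EV i j c) =
  c * (row_mx (0 : 'M[C]_(r, p)) (delta_mx i j) *m invmx (PhiDen Q)) a b.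
Proof. by rewrite pd_V rowZ_V. Qed.

Lemma usum (u1 ui v1 vi u1' ui' v1' vi' x y z w : C) :
  u1 = 1 * x -> u1' = 1 * y -> v1 = 1 * z -> v1' = 1 * w ->
  ui = Complex 0 1 * x -> ui' = Complex 0 1 * y -> vi = Complex 0 1 * z -> vi' = Complex 0 1 * w ->
  u1 * u1' + v1 * v1' + ((ui * ui' + vi * vi') + 0) = 0.
Proof. move=> -> -> -> -> -> -> -> ->; exact: ii_sum. Qed.

End Main4.

Local Close Scope complex_scope.

Theorem proposition6p2 (R : realType) (p r : nat) :
  (0 < p)%N -> (0 < r)%N ->
  (* Phi is well defined on U_pq(H): the denominator is invertible *)
  (forall Q : HQ R p r, U_pq Q -> PhiDen Q \in unitmx) /\
  (* the components are GL_p(H)-invariant *)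
  (forall (Q : HQ R p r) (G1 G2 : 'M[R[i]]_p), U_pq Q -> qinvertible G1 G2 ->
     Phi (ract Q G1 G2) = Phi Q) /\
  (* the components form an orthogonal harmonic family on U_pq(H) *)
  orthogonal_harmonic_family (@U_pq R p r)
    (fun (ab : 'I_r * 'I_(p + p)) (Q : HQ R p r) => Phi Q ab.1 ab.2).
Proof.
move=> _ _.
split; first by move=> Q; exact: unitU.
split; first by move=> Q G1 G2 HU; apply: Phi_ract (unitU HU).
split; [|split].
- move=> k Q E HU.
  have [f g] := good_Phi E k.1 k.2 (unitU HU).
  exact: deriv2_of_good g.
- move=> k Q HU; rewrite /tau /metric_sum; cbv beta.
  have Mu := unitU HU.
  rewrite big1 ?add0r; last first.
    move=> i _; apply: big1 => j _; apply: big1_seq => c _.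
    have [_ hX] := pairXZ k.1 k.2 i j c Mu.
    have [_ hY] := pairYW k.1 k.2 i j c Mu.
    exact: tcanc hX hY.
  apply: big1 => i _; apply: big1 => j _; apply: big1_seq => c _.
  by rewrite pd2_U pd2_V addr0.
- move=> k l Q HU; rewrite /kappa /metric_sum; cbv beta.
  have Mu := unitU HU.
  rewrite big1 ?add0r; last first.
    move=> i _; apply: big1 => j _; apply: big1_seq => c _.
    have [hX _] := pairXZ k.1 k.2 i j c Mu.
    have [hY _] := pairYW k.1 k.2 i j c Mu.
    have [hX2 _] := pairXZ l.1 l.2 i j c Mu.
    have [hY2 _] := pairYW l.1 l.2 i j c Mu.
    exact: kcanc hX hY hX2 hY2.
  apply: big1 => i _; apply: big1 => j _.
  rewrite /units !big_cons big_nil.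
  exact: (usum (pd_U' _ _ _ _ _ _) (pd_U' _ _ _ _ _ _) (pd_V' _ _ _ _ _ _) (pd_V' _ _ _ _ _ _)
    (pd_U' _ _ _ _ _ _) (pd_U' _ _ _ _ _ _) (pd_V' _ _ _ _ _ _) (pd_V' _ _ _ _ _ _)).
Qed.
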